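(* Let $f\in C^1(\mathbb{R})$ with $f(0)=0$, $m>0$, $\omega\in(0,m)$, and let $(v,u)$ be real-valued, exponentially decaying solutions of $\omega v=\partial_x u+[m-f(v^2-u^2)]v$, $\omega u=-\partial_x v-[m-f(v^2-u^2)]u$ on $\mathbb{R}$. Let $$\mathcal{A}_\omega=\begin{pmatrix}0&L_-(\omega)\\-L_+(\omega)&0\end{pmatrix},\quad L_-(\omega)=\begin{pmatrix}m-f(\tau)-\omega&\partial_x\\-\partial_x&-m+f(\tau)-\omega\end{pmatrix},\quad L_+(\omega)=L_-(\omega)-2f'(\tau)\begin{pmatrix}v^2&-vu\\-vu&u^2\end{pmatrix},$$ with $\tau=v^2-u^2$, acting on $L^2(\mathbb{R},\mathbb{C}^4)$. Then $\pm2\omega i$ are eigenvalues of $\mathcal{A}_\omega$ (with eigenfunctions in $H^1(\mathbb{R},\mathbb{C}^4)$), for any such nonlinearity $f$.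
   Context: $\mathcal{A}_\omega$ is the linearization of the 1D Soler model $i\partial_t\psi_1=\partial_x\psi_2+(m-f(|\psi_1|^2-|\psi_2|^2))\psi_1$, $i\partial_t\psi_2=-\partial_x\psi_1-(m-f(|\psi_1|^2-|\psi_2|^2))\psi_2$ at the solitary wave $(v,u)^Te^{-i\omega t}$, written for $R=(\mathrm{Re}\rho,\mathrm{Im}\rho)\in\mathbb{R}^4$ where $\psi=((v,u)^T+\rho)e^{-i\omega t}$, and complexified. *)

(* Defs.v *)
From Stdlib Require Import Reals Lra.
Open Scope R_scope.

Definition tau (v u : R -> R) (x : R) : R := v x ^ 2 - u x ^ 2.

Definition C1_with_deriv (f df : R -> R) : Prop :=
  (forall x, derivable_pt_lim f x (df x)) /\ continuity df.

Definition soler_profile (m w : R) (f v u dv du : R -> R) : Prop :=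
  (forall x, derivable_pt_lim v x (dv x)) /\
  (forall x, derivable_pt_lim u x (du x)) /\
  (forall x, w * v x = du x + (m - f (tau v u x)) * v x) /\
  (forall x, w * u x = - dv x - (m - f (tau v u x)) * u x).

Definition exp_decaying (v u : R -> R) : Prop :=
  exists C k, 0 < k /\ forall x, Rabs (v x) + Rabs (u x) <= C * exp (- k * Rabs x).

(* square integrability on R (improper Riemann sense): locally Riemann
   integrable square, with uniformly bounded integrals over compact intervals *)
Definition L2 (g : R -> R) : Prop :=
  (forall a b, exists pr : Riemann_integrable (fun x => g x ^ 2) a b, True) /\
  (exists M, forall a b (pr : Riemann_integrable (fun x => g x ^ 2) a b),
      a <= b -> RiemannInt pr <= M).

(* Pointwise action of A_w on R^4-valued functions R = (X1,X2,Y1,Y2),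
   X = Re rho, Y = Im rho:  A (X,Y) = (L_- Y, - L_+ X).
   g j = j-th component at x, dg j = its derivative at x. *)
Definition Aomega (m w : R) (f df v u : R -> R) (x : R) (g dg : nat -> R)
  (k : nat) : R :=
  let t := tau v u x in
  match k with
  | 0%nat => (m - f t - w) * g 2%nat + dg 3%nat
  | 1%nat => - dg 2%nat + (- m + f t - w) * g 3%nat
  | 2%nat => - ((m - f t - w) * g 0%nat + dg 1%nat
                - 2 * df t * (v x ^ 2 * g 0%nat - v x * u x * g 1%nat))
  | 3%nat => - (- dg 0%nat + (- m + f t - w) * g 1%nat
                - 2 * df t * (- v x * u x * g 0%nat + u x ^ 2 * g 1%nat))
  | _ => 0
  end.

(* i*mu is an eigenvalue of the complexified A_w, with an eigenfunction
   Psi = P + i Q in H^1(R, C^4):  A P = - mu Q,  A Q = mu P, Psi <> 0. *)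
Definition has_imag_eigenvalue_H1 (m w : R) (f df v u : R -> R) (mu : R) : Prop :=
  exists P Q dP dQ : nat -> R -> R,
    (forall k x, (k < 4)%nat ->
       derivable_pt_lim (P k) x (dP k x) /\ derivable_pt_lim (Q k) x (dQ k x)) /\
    (forall k, (k < 4)%nat -> L2 (P k) /\ L2 (dP k) /\ L2 (Q k) /\ L2 (dQ k)) /\
    (exists k x, (k < 4)%nat /\ (P k x <> 0 \/ Q k x <> 0)) /\
    (forall k x, (k < 4)%nat ->
       Aomega m w f df v u x (fun j => P j x) (fun j => dP j x) k = - mu * Q k x /\
       Aomega m w f df v u x (fun j => Q j x) (fun j => dQ j x) k = mu * P k x).

(* Main.v *)
Require Import Defs.
From Stdlib Require Import Reals.
From Stdlib Require Import Lra Lia Psatz.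
From Coquelicot Require Import Coquelicot.
Open Scope R_scope.

Definition good (g : R -> R) : Prop :=
  (forall x, continuous g x) /\
  exists K k, 0 < k /\ forall x, Rabs (g x) <= K * exp (- k * Rabs x).

Lemma exp_bound (k x : R) : 0 < k ->
  exp (- k * Rabs x) ^ 2 * (1 + (k * x) ^ 2) <= 1.
Proof.
  intros hk.
  assert (hE := exp_ineq1_le (k * Rabs x)).
  assert (hpos := exp_pos (k * Rabs x)).
  assert (Hinv : exp (- k * Rabs x) = / exp (k * Rabs x)).
  { replace (- k * Rabs x) with (- (k * Rabs x)) by ring. apply exp_Ropp. }
  rewrite Hinv.
  assert (ha : 0 <= Rabs x) by apply Rabs_pos.
  assert (hx2 : x ^ 2 = Rabs x ^ 2).
  { rewrite <- (pow2_abs x). reflexivity. }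
  set (E := exp (k * Rabs x)) in *.
  assert (E ^ 2 >= 1 + (k * x) ^ 2).
  { replace ((k*x)^2) with (k^2 * x^2) by ring. rewrite hx2.
    assert (0 <= k * Rabs x) by (apply Rmult_le_pos; lra).
    assert ((1 + k * Rabs x) * (1 + k * Rabs x) <= E * E) by (apply Rmult_le_compat; lra).
    nra. }
  rewrite pow_inv.
  assert (0 < E^2) by (apply pow_lt; lra).
  apply (Rmult_le_reg_l (E^2)). lra.
  rewrite <- Rmult_assoc, Rinv_r by lra. lra.
Qed.

Lemma good_L2 g : good g -> L2 g.
Proof.
  intros [hc [K [k [hk hb]]]].
  assert (hc2 : forall x, continuous (fun y => g y ^ 2) x).
  { intro x. apply (continuous_comp g (fun t => t^2)); auto.
    apply (ex_derive_continuous (fun t => t^2)). auto_derive. auto. }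
  split.
  - intros a b. exists (ex_RInt_Reals_0 _ _ _ (ex_RInt_continuous _ a b (fun z _ => hc2 z))). exact I.
  - exists (K ^ 2 / k * PI). intros a b pr hab.
    rewrite <- RInt_Reals.
    set (h := fun x => K ^ 2 / k * atan (k * x)).
    set (dh := fun x : R => K ^ 2 / k * (k * / (1 + (k * x) ^ 2))).
    assert (hdh : forall x, continuous dh x).
    { intro x. unfold dh. apply (ex_derive_continuous (fun x0 => K ^ 2 / k * (k * / (1 + (k * x0) ^ 2)))).
      auto_derive. nra. }
    assert (Hi : is_RInt dh a b (minus (h b) (h a))).
    { apply (is_RInt_derive h dh); auto. intros x _. unfold h, dh.
      apply is_derive_scal. 
      apply (is_derive_comp atan (fun y => k * y)).
      - apply is_derive_Reals. apply derivable_pt_lim_atan.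
      - apply is_derive_Reals. pose proof (derivable_pt_lim_scal id k x 1 (derivable_pt_lim_id x)) as E. rewrite Rmult_1_r in E. exact E. }
    apply Rle_trans with (RInt dh a b).
    + apply RInt_le; auto.
      * apply (ex_RInt_continuous (fun y => g y ^ 2)). intros; auto.
      * exists (minus (h b) (h a)). exact Hi.
      * intros x _. unfold dh.
        assert (hb' := hb x). assert (he := exp_bound k x hk).
        assert (hp := exp_pos (- k * Rabs x)).
        assert (0 < 1 + (k*x)^2) by nra.
        assert (Ka : Rabs (g x) <= Rabs K * exp (- k * Rabs x)).
        { apply Rle_trans with (1 := hb'). apply Rmult_le_compat_r; [lra| apply Rle_abs]. }
        assert (g x ^ 2 <= K^2 * exp (- k * Rabs x) ^ 2).
        { rewrite <- (pow2_abs (g x)), <- (pow2_abs K).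
          assert (0 <= Rabs (g x)) by apply Rabs_pos. nra. }
        replace (K ^ 2 / k * (k * / (1 + (k * x) ^ 2))) with (K^2 / (1 + (k*x)^2)) by (field; lra).
        apply Rle_trans with (1 := H0). unfold Rdiv.
        apply Rmult_le_compat_l. nra.
        apply (Rmult_le_reg_r (1 + (k*x)^2)); auto.
        rewrite Rinv_l by lra. lra.
    + rewrite (is_RInt_unique _ _ _ _ Hi). unfold h, minus, plus, opp; simpl.
      assert (h1 := atan_bound (k * b)). assert (h2 := atan_bound (k * a)).
      assert (0 <= K^2/k) by (unfold Rdiv; apply Rmult_le_pos; [nra| left; apply Rinv_0_lt_compat; lra]).
      nra.
Qed.

Lemma good_ext g h : (forall x, g x = h x) -> good g -> good h.
Proof.
  intros E [hc [K [k [hk hb]]]]. split.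
  - intro x. apply (continuous_ext g h); auto.
  - exists K, k. split; auto. intro x. rewrite <- E. auto.
Qed.

Lemma good_opp g : good g -> good (fun x => - g x).
Proof.
  intros [hc [K [k [hk hb]]]]. split.
  - intro x. apply (continuous_comp g (fun t => - t)); auto.
    apply (ex_derive_continuous (fun t => - t)). auto_derive. auto.
  - exists K, k. split; auto. intro x. rewrite Rabs_Ropp. auto.
Qed.

Lemma good_zero : good (fun _ => 0).
Proof.
  split. intro x. apply continuous_const.
  exists 0, 1. split. lra. intro x. rewrite Rabs_R0. lra.
Qed.

Lemma cont_of_der g dg x : derivable_pt_lim g x (dg x) -> continuous g x.
Proof. intro H. apply (@ex_derive_continuous R_AbsRing R_NormedModule g x). exists (dg x). apply is_derive_Reals. exact H. Qed.

Lemma cpt g x : continuous g x -> continuity_pt g x.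
Proof. intro H. apply continuity_pt_filterlim. exact H. Qed.
Lemma cpt' g x : continuity_pt g x -> continuous g x.
Proof. intro H. apply continuity_pt_filterlim. exact H. Qed.

Lemma cont_sq (g : R -> R) (x : R) : continuous g x -> continuous (fun y : R => g y ^ 2) x.
Proof. intro. apply (continuous_comp g (fun t => t^2)); auto.
    apply (ex_derive_continuous (fun t => t^2)). auto_derive. auto. Qed.

Lemma profile_good (f df : R -> R) (m w : R) (v u dv du : R -> R) :
  C1_with_deriv f df -> 0 < m -> 0 < w ->
  soler_profile m w f v u dv du ->
  exp_decaying v u ->
  good u /\ good v /\ good du /\ good dv.
Proof.
  intros [hf _] hm hw [hv [hu [e1 e2]]] [C [k [hk hb]]].
  assert (cv : forall x, continuous v x) by (intro x; apply (cont_of_der v dv); auto).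
  assert (cu : forall x, continuous u x) by (intro x; apply (cont_of_der u du); auto).
  assert (cf : forall x, continuous f x) by (intro x; apply (cont_of_der f df); auto).
  assert (hC : 0 <= C).
  { assert (H := hb 0). rewrite Rabs_R0, Rmult_0_r, exp_0 in H.
    assert (0 <= Rabs (v 0)) by apply Rabs_pos. assert (0 <= Rabs (u 0)) by apply Rabs_pos. lra. }
  assert (bv : forall x, Rabs (v x) <= C * exp (- k * Rabs x)).
  { intro x. assert (H := hb x). assert (0 <= Rabs (u x)) by apply Rabs_pos. lra. }
  assert (bu : forall x, Rabs (u x) <= C * exp (- k * Rabs x)).
  { intro x. assert (H := hb x). assert (0 <= Rabs (v x)) by apply Rabs_pos. lra. }
  assert (ble : forall x, exp (- k * Rabs x) <= 1).
  { intro x. rewrite <- exp_0. destruct (Req_dec x 0) as [->|].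
    rewrite Rabs_R0. right. f_equal. ring.
    left. apply exp_increasing. assert (0 < Rabs x) by (apply Rabs_pos_lt; auto). nra. }
  assert (ctau : forall x, continuity_pt (tau v u) x).
  { intro x. unfold tau.
    apply (continuity_pt_minus (fun y => v y ^ 2) (fun y => u y ^ 2)); apply cpt; apply cont_sq; auto. }
  destruct (continuity_ab_maj (fun t => Rabs (f t)) (- C^2) (C^2)) as [Mx [HM _]].
  { nra. }
  { intros c _. apply cpt. apply (continuous_comp f Rabs); auto. apply cpt'. apply Rcontinuity_abs. }
  set (B := Rabs (f Mx)) in *.
  assert (hB : forall x, Rabs (f (tau v u x)) <= B).
  { intro x. apply HM. unfold tau.
    assert (H1 := bv x). assert (H2 := bu x). assert (H3 := ble x).
    assert (Rabs (v x) <= C) by nra. assert (Rabs (u x) <= C) by nra.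
    rewrite <- (pow2_abs (v x)), <- (pow2_abs (u x)).
    assert (0 <= Rabs (v x)) by apply Rabs_pos. assert (0 <= Rabs (u x)) by apply Rabs_pos.
    split; nra. }
  assert (gu : good u) by (split; auto; exists C, k; auto).
  assert (gv : good v) by (split; auto; exists C, k; auto).
  assert (hB0 : 0 <= B) by apply Rabs_pos.
  split; [|split; [|split]]; auto.
  - split.
    + intro x. apply continuous_ext with (fun y => (w - m + f (tau v u y)) * v y).
      { intro y. specialize (e1 y). lra. }
      apply cpt'. apply (continuity_pt_mult (fun y => (w - m + f (tau v u y))) v); [|apply cpt; auto].
      apply (continuity_pt_plus (fun _ => w - m) (fun y => f (tau v u y))). apply continuity_pt_const. intros a b; auto.
      apply (continuity_pt_comp (tau v u) f); auto. apply cpt; auto.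
    + exists ((w + m + B) * C), k. split; auto. intro x.
      replace (du x) with ((w - m + f (tau v u x)) * v x) by (specialize (e1 x); lra).
      rewrite Rabs_mult. rewrite Rmult_assoc. apply Rmult_le_compat; try apply Rabs_pos; auto.
      apply Rle_trans with (Rabs w + Rabs m + Rabs (f (tau v u x))).
      { unfold Rminus. eapply Rle_trans. apply Rabs_triang. rewrite <- Rabs_Ropp with (x := m).
        assert (H := Rabs_triang w (- m)). specialize (hB x). lra. }
      rewrite (Rabs_right w), (Rabs_right m) by lra. specialize (hB x). lra.
  - split.
    + intro x. apply continuous_ext with (fun y => (- w - m + f (tau v u y)) * u y).
      { intro y. specialize (e2 y). lra. }
      apply cpt'. apply (continuity_pt_mult (fun y => (- w - m + f (tau v u y))) u); [|apply cpt; auto].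
      apply (continuity_pt_plus (fun _ => - w - m) (fun y => f (tau v u y))). apply continuity_pt_const. intros a b; auto.
      apply (continuity_pt_comp (tau v u) f); auto. apply cpt; auto.
    + exists ((w + m + B) * C), k. split; auto. intro x.
      replace (dv x) with ((- w - m + f (tau v u x)) * u x) by (specialize (e2 x); lra).
      rewrite Rabs_mult. rewrite Rmult_assoc. apply Rmult_le_compat; try apply Rabs_pos; auto.
      apply Rle_trans with (Rabs w + Rabs m + Rabs (f (tau v u x))).
      { unfold Rminus. eapply Rle_trans. apply Rabs_triang. 
        assert (H := Rabs_triang (- w) (- m)). rewrite !Rabs_Ropp in H. specialize (hB x). lra. }
      rewrite (Rabs_right w), (Rabs_right m) by lra. specialize (hB x). lra.
Qed.

Lemma eig (f df : R -> R) (m w : R) (v u dv du : R -> R) (s : R) :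
  (s = 1 \/ s = -1) ->
  C1_with_deriv f df -> 0 < m -> 0 < w ->
  soler_profile m w f v u dv du ->
  exp_decaying v u ->
  (exists x, v x <> 0 \/ u x <> 0) ->
  has_imag_eigenvalue_H1 m w f df v u (s * (2 * w)).
Proof.
  intros hs hC hm hw hp he [x0 hx0].
  destruct (profile_good f df m w v u dv du hC hm hw hp he) as [gu [gv [gdu gdv]]].
  destruct hp as [hv [hu [e1 e2]]].
  exists (fun j x => match j with 0%nat => u x | 1%nat => v x | _ => 0 end),
         (fun j x => match j with 2%nat => - s * u x | 3%nat => - s * v x | _ => 0 end),
         (fun j x => match j with 0%nat => du x | 1%nat => dv x | _ => 0 end),
         (fun j x => match j with 2%nat => - s * du x | 3%nat => - s * dv x | _ => 0 end).
  assert (gs : forall g, good g -> good (fun x => - s * g x)).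
  { intros g hg. destruct hs as [-> | ->].
    - apply good_ext with (fun x => - g x). intro; ring. apply good_opp; auto.
    - apply good_ext with g. intro; ring. auto. }
  split; [|split; [|split]].
  - intros k x hk. destruct k as [|[|[|[|k]]]]; try lia; split;
      try apply derivable_pt_lim_const; auto.
    + pose proof (derivable_pt_lim_scal u (- s) x (du x) (hu x)). exact H.
    + pose proof (derivable_pt_lim_scal v (- s) x (dv x) (hv x)). exact H.
  - intros k hk. assert (L0 := good_L2 _ good_zero).
    destruct k as [|[|[|[|k]]]]; try lia; refine (conj _ (conj _ (conj _ _)));
    try exact L0; try (apply good_L2; apply gs; auto); apply good_L2; auto.
  - destruct hx0; [exists 1%nat, x0 | exists 0%nat, x0]; split; try lia; left; simpl; auto.
  - intros k x hk. specialize (e1 x). specialize (e2 x).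
    destruct k as [|[|[|[|k]]]]; try lia; unfold Aomega; simpl; split;
    destruct hs as [-> | ->]; nra.
Qed.

Theorem mainTheorem5 (f df : R -> R) (m w : R) (v u dv du : R -> R) :
  C1_with_deriv f df -> f 0 = 0 ->
  0 < m -> 0 < w -> w < m ->
  soler_profile m w f v u dv du ->
  exp_decaying v u ->
  (exists x, v x <> 0 \/ u x <> 0) ->
  has_imag_eigenvalue_H1 m w f df v u (2 * w) /\
  has_imag_eigenvalue_H1 m w f df v u (- (2 * w)).
Proof.
  intros hC _ hm hw _ hp he hx. split.
  - replace (2 * w) with (1 * (2 * w)) by ring. apply (eig f df m w v u dv du); auto.
  - replace (- (2 * w)) with (-1 * (2 * w)) by ring. apply (eig f df m w v u dv du); auto.
Qed.
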